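(* Let $n\ge2$ and let $\Gamma$ be a set of $2n$ points in $\mathbb{P}^{n-1}$ such that the cone $L_{2n}^n\subset\mathbb{A}^n$ over $\Gamma$ is Gorenstein, every $n$ of the points span $\mathbb{P}^{n-1}$, and every $2n-1$ of the points impose independent conditions on quadrics. Then $T^1_\ell(L_{2n}^n)=0$ for all $\ell>0$; that is, $L_{2n}^n$ has no nontrivial infinitesimal deformations of positive weight.
   Context: Ground field $\k$ algebraically closed, characteristic $0$. $T^1=\operatorname{Coker}\big(\Theta_n\otimes\mathcal{O}\to\operatorname{Hom}_{\mathcal{O}_n}(I,\mathcal{O})\big)$ for the homogeneous ideal $I$ of the cone (all variables of weight $1$), graded so that $T^1_\ell$ is the image of homomorphisms sending each homogeneous generator of degree $q$ to an element of degree $q+\ell$. *)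

(* Defs.v *)
From HB Require Import structures.
From mathcomp Require Import all_boot all_order all_algebra.
From mathcomp Require Import mpoly.
Set Implicit Arguments. Unset Strict Implicit. Unset Printing Implicit Defensive.
Import GRing.Theory.
Local Open Scope ring_scope.

Section Cone.
Variables (k : fieldType) (n N : nat).
(* N points of P^{n-1}, given by representative vectors v i in k^n. *)
Variable v : 'I_N -> 'I_n -> k.

Definition in_coneI (f : {mpoly k[n]}) : Prop :=
  forall (i : 'I_N) (t : k), f.@[fun j => t * v i j] = 0.

Definition distinct_points : Prop :=
  (forall i, exists j, v i j != 0) /\
  (forall i i' : 'I_N, i != i' -> forall t : k, exists j, v i j != t * v i' j).

Definition every_n_span : Prop :=
  forall s : 'I_n -> 'I_N, injective s ->
    \det (\matrix_(a < n, b < n) v (s a) b) != 0.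

(* every N-1 of the points impose independent conditions on quadrics:
   evaluation of quadratic forms at the points other than i is surjective *)
Definition indep_on_quadrics_but_one : Prop :=
  forall (i : 'I_N) (c : 'I_N -> k), exists q : {mpoly k[n]},
    q \is 2.-homog /\ forall j, j != i -> q.@[v j] = c j.

(* The cone over the points is Gorenstein: its homogeneous coordinate ring
   O = k[x]/I (reduced, of dimension 1) is Cohen-Macaulay of type 1, i.e.
   there is a linear form lam which is a nonzerodivisor on O and the socle
   of the Artinian ring O/(lam) is one-dimensional over k. *)
Definition in_coneI_lam (lam g : {mpoly k[n]}) : Prop :=
  exists f a, in_coneI f /\ g = f + a * lam.

Definition cone_Gorenstein : Prop :=
  exists lam : {mpoly k[n]},
    lam \is 1.-homog /\
    (forall f, in_coneI (lam * f) -> in_coneI f) /\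
    exists s : {mpoly k[n]},
      ~ in_coneI_lam lam s /\
      (forall j : 'I_n, in_coneI_lam lam ('X_j * s)) /\
      (forall g : {mpoly k[n]}, (forall j : 'I_n, in_coneI_lam lam ('X_j * g)) ->
         exists c : k, in_coneI_lam lam (g - c *: s)).

(* Elements of Hom_{O_n}(I, O): maps phi on I with values read modulo I,
   O_n-linear modulo I. *)
Definition is_hom_I_O (phi : {mpoly k[n]} -> {mpoly k[n]}) : Prop :=
  forall a b f g : {mpoly k[n]}, in_coneI f -> in_coneI g ->
    in_coneI (phi (a * f + b * g) - (a * phi f + b * phi g)).

Definition hom_of_weight (l : nat) (phi : {mpoly k[n]} -> {mpoly k[n]}) : Prop :=
  forall (q : nat) (f : {mpoly k[n]}), in_coneI f -> f \is q.-homog ->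
    exists h : {mpoly k[n]}, h \is (q + l)%N.-homog /\ in_coneI (phi f - h).

(* phi lies in the image of Theta_n (x) O -> Hom(I, O), i.e. it is induced
   by a derivation sum_j g_j d/dx_j *)
Definition from_derivation (phi : {mpoly k[n]} -> {mpoly k[n]}) : Prop :=
  exists g : 'I_n -> {mpoly k[n]}, forall f : {mpoly k[n]}, in_coneI f ->
    in_coneI (phi f - \sum_(j < n) g j * mderiv j f).

Definition T1_vanishes (l : nat) : Prop :=
  forall phi, is_hom_I_O phi -> hom_of_weight l phi -> from_derivation phi.
End Cone.

(* Main.v *)
Require Import Defs.
From HB Require Import structures.
From mathcomp Require Import all_boot all_order all_algebra.
From mathcomp Require Import mpoly.
From mathcomp Require Import ring zify.
Set Implicit Arguments. Unset Strict Implicit. Unset Printing Implicit Defensive.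
Import GRing.Theory.
Local Open Scope ring_scope.

Section Gen.
Variables (k : fieldType) (n : nat).
Implicit Types (p q f : {mpoly k[n]}).

Lemma meval_homog d p (t : k) (x : 'I_n -> k) : p \is d.-homog ->
  p.@[fun j => t * x j] = t ^+ d * p.@[x].
Proof.
move=> Hp; rewrite !mevalE mulr_sumr big_seq [RHS]big_seq; apply: eq_bigr => m Hm.
rewrite (eq_bigr _ (fun j _ => exprMn _ _ _)) big_split /= prodrXr -mdegE.
by rewrite (dhomog_mf Hp Hm) mulrCA.
Qed.

Lemma mderiv_homog d p j : p \is d.-homog -> mderiv j p \is d.-1.-homog.
Proof.
move=> /dhomogP Hp; apply/dhomogP => m; rewrite mcoeff_msupp mcoeff_mderiv.
case: (boolP (m + U_(j) \in msupp p))%MM => [/Hp|].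
  move=> H _; have E : mdeg (m + U_(j))%MM = (mdeg m + 1)%N by rewrite -(mdeg1 j); apply: mdegD.
  rewrite -H; change (mdeg m = (mdeg (m + U_(j))%MM).-1); by rewrite E addn1.
by move/memN_msupp_eq0 ->; rewrite mul0rn eqxx.
Qed.

Lemma mderiv_homog0 p j : p \is 0.-homog -> mderiv j p = 0.
Proof.
move=> Hp; apply/mpolyP => m; rewrite mcoeff_mderiv mcoeff0.
rewrite (dhomog_nemf_coeff Hp) ?mul0rn //.
have E : mdeg (m + U_(j))%MM = (mdeg m + 1)%N by rewrite -(mdeg1 j); apply: mdegD.
by change (mdeg (m + U_(j))%MM != 0%N); rewrite E addn1.
Qed.

Lemma mderivXU (i j : 'I_n) : mderiv j ('X_i : {mpoly k[n]}) = (i == j)%:R.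
Proof.
rewrite mderivX mnm1E; case: eqP => [->|_]; last by rewrite scale0r.
have -> : (U_(j) - U_(j) = 0)%MM by rewrite -{1}[(U_(j))%MM]add0m addmK.
by rewrite mpolyX0 scale1r.
Qed.
End Gen.

Section Gen2.
Variables (k : fieldType) (n : nat).
Hypothesis Hchar : [pchar k] =i pred0.
Implicit Types (p q f : {mpoly k[n]}).

Lemma poly_vanish (K : nat) (a : nat -> k) :
  (forall t : k, \sum_(d < K) a d * t ^+ d = 0) -> forall d, (d < K)%N -> a d = 0.
Proof.
move=> H d Hd.
have P0 : \poly_(i < K) a i = 0.
  apply: (@roots_geq_poly_eq0 _ _ [seq i%:R | i <- iota 0 K]).
  - by apply/allP => x /mapP [i _ ->]; rewrite /root horner_poly H.
  - rewrite map_inj_in_uniq ?iota_uniq // => i j _ _.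
    move/pcharf0P: Hchar => Hc.
    wlog lij : i j / (i <= j)%N => [W|].
      case/orP: (leq_total i j) => [/W //|ji E]; by apply/esym/(W _ _ ji).
    move=> E; have : ((j - i)%N%:R == 0 :> k) by rewrite natrB // E subrr.
    by rewrite Hc subn_eq0 => E2; apply/eqP; rewrite eqn_leq lij E2.
  - by rewrite size_map size_iota size_poly.
by have := congr1 (fun p : {poly k} => p`_d) P0; rewrite coef_poly Hd coef0.
Qed.

Lemma line_components f (x : 'I_n -> k) :
  (forall t : k, f.@[fun j => t * x j] = 0) ->
  forall d, (pihomog mdeg d f).@[x] = 0.
Proof.
move=> H d; pose K := maxn (msize f) d.+1.
have E := @pihomog_partitionE _ _ mdeg K f (leq_maxl _ _).
apply: (@poly_vanish K (fun e => (pihomog mdeg e f).@[x])); last by rewrite leq_max ltnSn orbT.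
move=> t; rewrite -[X in _ = X](H t) [in RHS]E raddf_sum /=; apply: eq_bigr => e _ /=.
by rewrite (meval_homog _ _ (pihomogP _ _ _)) mulrC.
Qed.
End Gen2.

Section Decomp.
Variables (k : fieldType) (n : nat) (kap : 'I_n -> k) (r : 'I_n).
Implicit Types (p q f : {mpoly k[n]}).

Definition wv j : {mpoly k[n]} := 'X_j - kap j *: 'X_r.
Definition Jid p := exists H : 'I_n -> {mpoly k[n]}, p = \sum_j wv j * H j.

Lemma Jid0 : Jid 0.
Proof. by exists (fun _ => 0); rewrite big1 // => j _; rewrite mulr0. Qed.

Lemma JidD p q : Jid p -> Jid q -> Jid (p + q).
Proof.
move=> [H ->] [G ->]; exists (fun j => H j + G j).
by rewrite -big_split /=; apply: eq_bigr => j _; rewrite mulrDr.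
Qed.

Lemma JidM p q : Jid p -> Jid (p * q).
Proof.
move=> [H ->]; exists (fun j => H j * q).
by rewrite mulr_suml; apply: eq_bigr => j _; rewrite mulrA.
Qed.

Lemma JidMl p q : Jid p -> Jid (q * p).
Proof. by rewrite mulrC; apply: JidM. Qed.

Lemma JidZ c p : Jid p -> Jid (c *: p).
Proof. by rewrite -mul_mpolyC; apply: JidMl. Qed.

Lemma Jid_sum (I : Type) (s : seq I) (P : pred I) (F : I -> {mpoly k[n]}) :
  (forall i, P i -> Jid (F i)) -> Jid (\sum_(i <- s | P i) F i).
Proof. by move=> H; apply: big_ind => //; [apply: Jid0 | apply: JidD]. Qed.

Lemma Jidw j : Jid (wv j).
Proof.
exists (fun l => (l == j)%:R).
rewrite (bigD1 j) //= eqxx mulr1 big1 ?addr0 // => l /negbTE ->; by rewrite mulr0.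
Qed.

Definition cong a b := Jid (a - b).

Lemma cong_mul a b c d : cong a b -> cong c d -> cong (a * c) (b * d).
Proof.
move=> H1 H2; rewrite /cong (_ : a * c - b * d = (a - b) * c + b * (c - d)).
  by apply: JidD; [apply: JidM | apply: JidMl].
by rewrite mulrBl mulrBr addrA subrK.
Qed.

Lemma cong_mono m :
  cong 'X_[m] ((\prod_(i < n) kap i ^+ m i) *: 'X_r ^+ mdeg m).
Proof.
rewrite mpolyXE_id mdegE -prodrXr -scaler_prod.
apply: (big_ind2 cong); first by rewrite /cong subrr; apply: Jid0.
  by move=> ? ? ? ?; apply: cong_mul.
move=> i _; rewrite -exprZn; elim: (m i) => [|e IH].
  by rewrite !expr0 /cong subrr; apply: Jid0.
by rewrite !exprS; apply: cong_mul => //; apply: Jidw.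
Qed.

Lemma decomp_homog d p : p \is d.-homog -> Jid (p - p.@[kap] *: 'X_r ^+ d).
Proof.
move=> Hp; rewrite {1}[p]mpolyE mevalE scaler_suml -sumrB big_seq.
apply: Jid_sum => m Hm; rewrite -scalerA -scalerBr; apply: JidZ.
by rewrite -(dhomog_mf Hp Hm); apply: cong_mono.
Qed.
End Decomp.

Lemma sum_delta (k : nzRingType) n (F : 'I_n -> k) (j : 'I_n) :
  \sum_(l < n) F l * (j == l)%:R = F j.
Proof.
rewrite (bigD1 j) //= eqxx mulr1 big1 ?addr0 // => l Hl.
by rewrite eq_sym (negbTE Hl) mulr0.
Qed.

Section Main.
Variables (k : fieldType) (n N : nat) (v : 'I_N -> 'I_n -> k).
Implicit Types (f g a b : {mpoly k[n]}).
Local Notation I := (in_coneI v).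

Lemma I_ev f i : I f -> f.@[v i] = 0.
Proof. by move=> /(_ i 1); rewrite (@meval_eq _ _ _ (v i)) // => j; rewrite mul1r. Qed.

Lemma I_homog d f : f \is d.-homog -> (forall i, f.@[v i] = 0) -> I f.
Proof. by move=> Hf H i t; rewrite (meval_homog _ _ Hf) H mulr0. Qed.

Lemma I0 : I 0.
Proof. by move=> i t; rewrite meval0. Qed.

Lemma IL a b f g : I f -> I g -> I (a * f + b * g).
Proof. by move=> Hf Hg i t; rewrite mevalD !mevalM Hf Hg !mulr0 addr0. Qed.

Lemma ID f g : I f -> I g -> I (f + g).
Proof. by move=> Hf Hg; rewrite -[f]mul1r -[g]mul1r; apply: IL. Qed.

Lemma IM a f : I f -> I (a * f).
Proof. by move=> Hf; rewrite -[_ * f]addr0 -(mul0r f); apply: IL. Qed.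

Lemma IN f : I f -> I (- f).
Proof. by move=> Hf; rewrite -mulN1r; apply: IM. Qed.

Lemma IB f g : I f -> I g -> I (f - g).
Proof. by move=> Hf Hg; apply: ID => //; apply: IN. Qed.

Variable phi : {mpoly k[n]} -> {mpoly k[n]}.
Hypothesis Hphi : is_hom_I_O v phi.

Definition alpha i f := (phi f).@[v i].

Lemma alpha_lin i a b f g : I f -> I g ->
  alpha i (a * f + b * g) = a.@[v i] * alpha i f + b.@[v i] * alpha i g.
Proof.
move=> Hf Hg; have := I_ev i (Hphi a b Hf Hg).
by rewrite mevalB mevalD !mevalM => /eqP; rewrite subr_eq0 => /eqP.
Qed.

Lemma alpha_mul i a f : I f -> alpha i (a * f) = a.@[v i] * alpha i f.
Proof.
move=> Hf; have := alpha_lin i a 0 Hf Hf.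
by rewrite mul0r addr0 meval0 mul0r addr0.
Qed.

Lemma alpha0 i : alpha i 0 = 0.
Proof. by have := alpha_mul i 0 I0; rewrite mul0r meval0 mul0r. Qed.

Lemma alpha_sum i (F G : 'I_n -> {mpoly k[n]}) : (forall j, I (G j)) ->
  I (\sum_j F j * G j) /\
  alpha i (\sum_j F j * G j) = \sum_j (F j).@[v i] * alpha i (G j).
Proof.
move=> HG; apply: (big_rec2 (fun y1 y2 => I y1 /\ alpha i y1 = y2)).
  by split; [apply: I0 | apply: alpha0].
move=> j y1 y2 _ [Hy <-]; split; first by rewrite -[y1]mul1r; apply: IL.
by rewrite -{1}[y1]mul1r alpha_lin // meval1 mul1r.
Qed.

Variables (i : 'I_N) (r : 'I_n) (e : {mpoly k[n]}) (de : nat).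
Hypotheses (Hr : v i r != 0) (He : e \is de.-homog) (Hei : e.@[v i] != 0)
  (Hep : forall p, p != i -> e.@[v p] = 0).

Let kap j := v i j / v i r.

Lemma wv_homog j : wv kap r j \is 1.-homog.
Proof.
by rewrite /wv rpredB ?rpredZ // dhomogX; apply/eqP; exact: mdeg1.
Qed.

Lemma wv_ev j : (wv kap r j).@[v i] = 0.
Proof.
by rewrite /wv mevalB mevalZ !mevalXU /kap divfK // subrr.
Qed.

Lemma Iwe j : I (wv kap r j * e).
Proof.
apply: (I_homog (d := (1 + de)%N)); first by apply: dhomogM => //; apply: wv_homog.
move=> p; rewrite mevalM; case: (eqVneq p i) => [->|/Hep ->].
  by rewrite wv_ev mul0r.
by rewrite mulr0.
Qed.

Definition cvec j := alpha i (wv kap r j * e) / e.@[v i].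

Lemma cvec_r : cvec r = 0.
Proof.
rewrite /cvec /wv /kap divff // scale1r subrr mul0r alpha0.
by rewrite mul0r.
Qed.

Lemma local_formula d f : f \is d.-homog -> I f -> forall mu : k,
  alpha i f = \sum_(l < n) (cvec l + mu * v i l) * (mderiv l f).@[v i].
Proof.
move=> Hfd Hf mu.
have [H Hdec] := decomp_homog kap r Hfd.
have Hk : f.@[kap] = 0.
  rewrite (@meval_eq _ _ _ (fun j => (v i r)^-1 * v i j)); last by move=> j; rewrite /kap mulrC.
  by rewrite (meval_homog _ _ Hfd) (I_ev i Hf) mulr0.
move: Hdec; rewrite Hk scale0r subr0 => Hdec.
pose h j := (H j).@[v i].
have Ha : alpha i f = \sum_j h j * cvec j.
  apply: (mulfI Hei); rewrite -alpha_mul //.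
  have -> : e * f = \sum_j H j * (wv kap r j * e).
    by rewrite Hdec mulr_sumr; apply: eq_bigr => j _; ring.
  rewrite (alpha_sum i H Iwe).2 mulr_sumr; apply: eq_bigr => j _.
  by rewrite /cvec /h mulrCA [e.@[v i] * _]mulrC divfK.
have Hd : forall l, (mderiv l f).@[v i] =
    \sum_j (((j == l)%:R - kap j * (r == l)%:R) * h j).
  move=> l; rewrite Hdec (raddf_sum (mderiv l)) (raddf_sum (meval (v i))) /=.
  apply: eq_bigr => j _.
  rewrite mderivM mevalD !mevalM wv_ev mul0r addr0 /wv mderivB mderivZ !mderivXU.
  by rewrite mevalB mevalZ !rmorph_nat.
rewrite Ha (eq_bigr _ (fun l _ => congr1 _ (Hd l))).
under eq_bigr do rewrite mulr_sumr.
rewrite exchange_big /=; apply: eq_bigr => j _.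
under eq_bigr do rewrite mulrA.
rewrite -mulr_suml mulrC; congr (_ * _).
under eq_bigr do rewrite mulrBr mulrCA.
rewrite sumrB -mulr_sumr !sum_delta cvec_r add0r.
by rewrite /kap mulrCA divfK // addrK.
Qed.
End Main.

Section Constr.
Variables (k : fieldType) (n : nat) (v : 'I_(2 * n) -> 'I_n -> k).
Hypothesis Hn : (2 <= n)%N.
Hypotheses (Hdist : distinct_points v) (Hspan : every_n_span v)
  (Hquad : indep_on_quadrics_but_one v).

Lemma other_point (i : 'I_(2 * n)) : exists p, p != i.
Proof.
have H0 : (0 < (2 * n).-1)%N by rewrite -subn1 subn_gt0; lia.
by exists (lift i (Ordinal H0)); rewrite eq_sym neq_lift.
Qed.

Lemma exists_Z (i p : 'I_(2 * n)) : p != i -> exists Z : {mpoly k[n]},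
  Z \is 2.-homog /\ Z.@[v i] = 1 /\ forall j, j != i -> j != p -> Z.@[v j] = 0.
Proof.
move=> Hpi; have [Z [HZ HZv]] := Hquad p (fun j => (j == i)%:R).
exists Z; split=> //; split; first by rewrite HZv ?eqxx // eq_sym.
by move=> j Hji Hjp; rewrite HZv // (negbTE Hji).
Qed.

Lemma exists_e (i : 'I_(2 * n)) : exists e : {mpoly k[n]},
  e \is 3.-homog /\ e.@[v i] != 0 /\ forall p, p != i -> e.@[v p] = 0.
Proof.
have [p0 Hp0] := other_point i.
have [Z [HZ [HZi HZo]]] := exists_Z Hp0.
have [a Ha] := Hdist.1 p0.
have Hip : i != p0 by rewrite eq_sym.
have [b Hb] := Hdist.2 i p0 Hip (v i a / v p0 a).
pose L : {mpoly k[n]} := v p0 a *: 'X_b - v p0 b *: 'X_a.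
have HL : L \is 1.-homog.
  by rewrite rpredB ?rpredZ // dhomogX; apply/eqP; exact: mdeg1.
have HLp : L.@[v p0] = 0.
  by rewrite mevalB !mevalZ !mevalXU mulrC subrr.
have HLi : L.@[v i] != 0.
  rewrite mevalB !mevalZ !mevalXU; apply: contra Hb => /eqP H.
  apply/eqP; apply: (mulfI Ha); rewrite (subr0_eq H).
  by field.
exists (Z * L); split; first by apply: (dhomogM HZ HL).
split; first by rewrite mevalM HZi mul1r.
move=> p Hp; rewrite mevalM; case: (eqVneq p p0) => [->|Hpp0].
  by rewrite HLp mulr0.
by rewrite HZo // mul0r.
Qed.


Lemma exists_g (c : 'I_(2 * n) -> 'I_n -> k) (l0 : nat) :
  exists g : 'I_n -> {mpoly k[n]}, (forall l, g l \is l0.+2.-homog) /\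
    forall j, exists mu : k, forall l, (g l).@[v j] = c j l + mu * v j l.
Proof.
have Hle : (n <= (2 * n).-1)%N by lia.
pose s (i : 'I_(2 * n)) (a : 'I_n) : 'I_(2 * n) := lift i (widen_ord Hle a).
have s_inj i : injective (s i).
  move=> a b /lift_inj /(congr1 val) /= E; exact: val_inj.
have s_neq i a : s i a != i by rewrite eq_sym neq_lift.
have [r Hr] := fin_all_exists (fun i => Hdist.1 i).
have HZ1 : forall i p, exists Z0 : {mpoly k[n]}, p != i -> Z0 \is 2.-homog /\
    Z0.@[v i] = 1 /\ forall j, j != i -> j != p -> Z0.@[v j] = 0.
  move=> i p; case: (eqVneq p i) => [->|H]; first by exists 0; move/eqP.
  by have [Z0 HZ0] := exists_Z H; exists Z0.
have HZ2 i := fin_all_exists (HZ1 i).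
have [Z HZ] := fin_all_exists HZ2.
pose M i := \matrix_(a < n, b < n) v (s i a) b.
have HM i : M i \in unitmx by rewrite unitmxE unitfE; apply: Hspan; apply: s_inj.
pose beta i a := ((\row_b c i b) *m invmx (M i)) 0 a.
have Hbeta i l : \sum_a beta i a * v (s i a) l = c i l.
  have := congr1 (fun A : 'M_(1, n) => A 0 l) (mulmxKV (HM i) (\row_b c i b)).
  rewrite /= mxE => <-; rewrite mxE.
  apply: eq_bigr => a _; by rewrite [M i a l]mxE.
pose w i a j := (Z i (s i a)).@[v j] * ((v i (r i))^-1 * v j (r i)) ^+ l0.
pose g l := \sum_i \sum_a (beta i a * v (s i a) l) *:
   (Z i (s i a) * ((v i (r i))^-1 *: 'X_(r i)) ^+ l0).
exists g; split.
  move=> l; apply: rpred_sum => i _; apply: rpred_sum => a _; apply: rpredZ.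
  rewrite (_ : l0.+2 = (2 + 1 * l0)%N); last by lia.
  apply: dhomogM; first by have [] := HZ i _ (s_neq i a).
  apply: dhomogMn; rewrite rpredZ // dhomogX; apply/eqP; exact: mdeg1.
move=> j; exists (\sum_i \sum_a (if i == j then 0 else beta i a * w i a j)).
move=> l.
have Hg : (g l).@[v j] = \sum_i \sum_a beta i a * v (s i a) l * w i a j.
  rewrite /g raddf_sum /=; apply: eq_bigr => i _.
  rewrite raddf_sum /=; apply: eq_bigr => a _.
  by rewrite mevalZ mevalM rmorphXn /= mevalZ mevalXU mulrA.
rewrite Hg.
have T : forall i a, beta i a * v (s i a) l * w i a j =
    (if i == j then beta i a * v (s i a) l else 0) +
    (if i == j then 0 else beta i a * w i a j) * v j l.
  move=> i a; case: (eqVneq i j) => [->|Hij].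
    rewrite mul0r addr0 /w; have [_ [H1 _]] := HZ j (s j a) (s_neq j a).
    by rewrite H1 mulVf ?Hr // expr1n !mulr1.
  rewrite add0r; case: (eqVneq (s i a) j) => [<-|Hs]; first by rewrite mulrAC.
  have [_ [_ H0]] := HZ i (s i a) (s_neq i a).
  by rewrite /w H0 1?eq_sym // !(mul0r, mulr0).
rewrite (eq_bigr _ (fun i _ => eq_bigr _ (fun a _ => T i a))).
under eq_bigr do rewrite big_split /=.
rewrite big_split /=; congr (_ + _).
  rewrite (bigD1 j) //= [X in _ + X]big1 ?addr0.
    by under eq_bigr do rewrite eqxx; apply: Hbeta.
  by move=> i /negbTE Hij; apply: big1 => a _; rewrite Hij.
rewrite mulr_suml; apply: eq_bigr => i _; by rewrite mulr_suml.
Qed.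
End Constr.


Lemma phi_sum (k : fieldType) n N (v : 'I_N -> 'I_n -> k) phi :
  is_hom_I_O v phi -> forall K (F : 'I_K -> {mpoly k[n]}),
  (forall d, in_coneI v (F d)) ->
  in_coneI v (\sum_d F d) /\ in_coneI v (phi (\sum_d F d) - \sum_d phi (F d)).
Proof.
move=> Hphi K F HF.
apply: (big_rec2 (fun y1 y2 => in_coneI v y1 /\ in_coneI v (phi y1 - y2))).
  split; first exact: I0.
  have := Hphi 0 0 0 0 (I0 v) (I0 v).
  by rewrite !mul0r !addr0 subr0.
move=> d y1 y2 _ [Hy1 Hy2]; split; first exact: ID.
have := Hphi 1 1 (F d) y1 (HF d) Hy1; rewrite !mul1r => H.
have := ID H (ID (I0 v) Hy2).
by rewrite add0r; congr in_coneI; ring.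
Qed.

Unset Implicit Arguments.
Theorem mainTheorem14 (k : closedFieldType) (Hchar : [pchar k] =i pred0)
  (n : nat) (Hn : (2 <= n)%N) (v : 'I_(2 * n) -> 'I_n -> k) :
  distinct_points v ->
  cone_Gorenstein v ->
  every_n_span v ->
  indep_on_quadrics_but_one v ->
  forall l : nat, (0 < l)%N -> T1_vanishes v l.
Proof.
move=> Hdist _ Hspan Hquad l Hl phi Hphi Hw.
have [r Hr] := fin_all_exists (fun i => Hdist.1 i).
have [e He] := fin_all_exists (exists_e Hn Hdist Hquad).
pose c i j := cvec v phi i (r i) (e i) j.
case: l Hl Hw => // l0 _ Hw.
have [g [Hg Hgv]] := exists_g Hn Hdist Hspan Hquad c l0.
exists g => f Hf.
pose D q := \sum_(j < n) g j * mderiv j q.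
pose K := msize f.
have Ef := @pihomog_partitionE _ _ mdeg K f (leqnn _).
pose fd (d : 'I_K) := pihomog mdeg d f.
have Ifd d : in_coneI v (fd d).
  apply: (I_homog (d := d)); first exact: pihomogP.
  by move=> i; apply: (line_components Hchar); move=> t; apply: Hf.
have Hd d : in_coneI v (phi (fd d) - D (fd d)).
  have [h [Hh Hph]] := Hw d (fd d) (Ifd d) (pihomogP _ _ _).
  have HD : D (fd d) \is (d + l0.+1).-homog.
    apply: rpred_sum => j _.
    have Hfd : fd d \is (nat_of_ord d).-homog by apply: pihomogP.
    case Ed : (nat_of_ord d) Hfd => [|d'] Hfd.
      by rewrite (mderiv_homog0 j Hfd) mulr0 rpred0.
    rewrite (_ : (d'.+1 + l0.+1)%N = (l0.+2 + d'.+1.-1)%N); last by lia.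
    by apply: dhomogM; [apply: Hg | apply: mderiv_homog].
  have H2 : in_coneI v (h - D (fd d)).
    apply: (I_homog (d := (d + l0.+1)%N)); first by apply: rpredB.
    move=> i; apply/eqP; rewrite mevalB subr_eq0; apply/eqP.
    have := I_ev i Hph; rewrite mevalB => /eqP; rewrite subr_eq0 => /eqP <-.
    have [mu Hmu] := Hgv i.
    have [He1 [He2 He3]] := He i.
    rewrite -/(alpha v phi i (fd d)) (local_formula Hphi (Hr i) He1 He2 He3 (pihomogP _ _ _) (Ifd d) mu).
    rewrite /D (raddf_sum (meval (v i))) /=; apply: eq_bigr => j _.
    by rewrite mevalM Hmu.
  by have := ID Hph H2; rewrite subrKA.
have [_ Hs] := phi_sum Hphi Ifd.
have HDs : D f = \sum_d D (fd d).
  rewrite /D {1}Ef; under eq_bigr do rewrite raddf_sum mulr_sumr.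
  by rewrite exchange_big.
have -> : phi f - D f = (phi (\sum_d fd d) - \sum_d phi (fd d)) + \sum_d (phi (fd d) - D (fd d)).
  by rewrite sumrB HDs -Ef addrA subrK.
apply: ID => //; apply: big_ind => //; [exact: I0 | move=> x y; exact: ID].
Qed.
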